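(* Let $\mathbb{K}$ be a field of characteristic zero, let $u,v\in\mathbb{K}$ with $uv\neq 0$, let $a_1,\dots,a_\ell\in\mathbb{K}$, and let $\alpha_1\le\alpha_2\le\dots\le\alpha_\ell$ and $\beta_1,\dots,\beta_\ell$ be nonnegative integers. Let \[P=\sum_{j=1}^{\ell} a_j X^{\alpha_j}(uX+v)^{\beta_j}\in\mathbb{K}[X].\] If $P\neq 0$, then \[\operatorname{val}(P)\le \max_{1\le j\le \ell}\left(\alpha_j+\binom{\ell+1-j}{2}\right).\]
   Context: For a nonzero polynomial $P\in\mathbb{K}[X]$, its valuation $\operatorname{val}(P)$ is the largest integer $v$ such that $X^v$ divides $P$. *)

(* Defs.v *)
From HB Require Import structures.
From mathcomp Require Import all_boot all_order all_algebra.
Set Implicit Arguments. Unset Strict Implicit. Unset Printing Implicit Defensive.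
Import GRing.Theory.
Local Open Scope ring_scope.

(* val P : the largest v such that 'X^v divides P (P nonzero).
   For P != 0, 'X^v %| P forces v < size P, so the max over v < size P
   is exactly the largest such v. *)
Definition poly_val (K : fieldType) (P : {poly K}) : nat :=
  (\max_(v < size P | ('X^v %| P)%R) v)%N.

(* Main.v *)
Require Import Defs.
From HB Require Import structures.
From mathcomp Require Import all_boot all_order all_algebra.
From mathcomp Require Import perm ring zify.
Import GRing.Theory.
Local Open Scope ring_scope.
Set Implicit Arguments. Unset Strict Implicit.

Section Th.
Variable K : fieldType.

Definition theta (p : {poly K}) := 'X * p^`().
Definition thn (r : nat) (p : {poly K}) := iter r theta p.

Lemma thetaD p q : theta (p + q) = theta p + theta q.
Proof. by rewrite /theta derivD mulrDr. Qed.
Lemma thetaZ c p : theta (c *: p) = c *: theta p.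
Proof. by rewrite /theta derivZ scalerAr. Qed.
Lemma thetaM p q : theta (p * q) = theta p * q + p * theta q.
Proof. rewrite /theta derivM; ring. Qed.
Lemma theta0 : theta 0 = 0.
Proof. by rewrite /theta deriv0 mulr0. Qed.

Lemma thnS r p : thn r.+1 p = theta (thn r p).
Proof. by []. Qed.
Lemma thnD r p q : thn r (p + q) = thn r p + thn r q.
Proof. by elim: r => //= r IH; rewrite IH thetaD. Qed.
Lemma thnZ r c p : thn r (c *: p) = c *: thn r p.
Proof. by elim: r => //= r IH; rewrite IH thetaZ. Qed.
Lemma thn0 r : thn r 0 = 0.
Proof. by elim: r => //= r IH; rewrite IH theta0. Qed.
Lemma thn_sum r I (s : seq I) (F : I -> {poly K}) :
  thn r (\sum_(i <- s) F i) = \sum_(i <- s) thn r (F i).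
Proof.
elim/big_rec2: _ => [|i y1 y2 _ <-]; first exact: thn0.
by rewrite thnD.
Qed.

Lemma thetaXn n : theta 'X^n = n%:R *: 'X^n.
Proof.
rewrite /theta derivXn; case: n => [|n]; first by rewrite mulr0n mulr0 scale0r.
by rewrite mulrnAr -exprS scaler_nat.
Qed.

Definition Rth (w : nat) (h : {poly K}) (r : nat) :=
  iter r (fun R => w%:R *: R + 'X * R^`()) h.

Lemma thn_Xn w h r : thn r ('X^w * h) = 'X^w * Rth w h r.
Proof.
elim: r => //= r IH; rewrite IH thetaM thetaXn /theta.
by rewrite -scalerAl mulrDr scalerAr mulrCA.
Qed.

Lemma Rth0 w h r : (Rth w h r).[0] = w%:R ^+ r * h.[0].
Proof.
elim: r => [|r IH] /=; first by rewrite mul1r.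
by rewrite hornerD hornerZ IH hornerM hornerX mul0r addr0 exprS mulrA.
Qed.
End Th.

Section Up.
Variable K : fieldType.
Variables u v : K.
Local Notation T := (u *: 'X + v%:P : {poly K}).

Lemma derivT : T^`() = u%:P.
Proof. by rewrite derivD derivZ derivX derivC addr0 -mul_polyC mulr1. Qed.

Lemma T_thetaT b : T * theta (T ^+ b) = (b%:R * u)%:P * 'X * T ^+ b.
Proof.
rewrite /theta deriv_exp derivT; case: b => [|b].
  by rewrite mulr0n mulr0 mulr0 mul0r rmorph0 mul0r mul0r.
rewrite exprS /= -mulr_natr rmorphM /= rmorph_nat; ring.
Qed.

Variables (al be : nat).
Definition Qnext (r : nat) (Q : {poly K}) :=
  ((al%:R)%:P * T + ((be%:R - r%:R) * u)%:P * 'X) * Q + 'X * T * Q^`().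
Fixpoint Qth (r : nat) : {poly K} :=
  match r with 0 => 1 | r'.+1 => Qnext r' (Qth r') end.

Lemma e3 Q : T * theta ('X^al * T ^+ be * Q) =
  'X^al * T^+be * (((al%:R)%:P * T + ((be%:R) * u)%:P * 'X) * Q + 'X * T * Q^`()).
Proof.
rewrite !thetaM thetaXn -mul_polyC.
have E := T_thetaT be.
rewrite [theta Q]/theta.
transitivity ((al%:R)%:P * 'X^al * T * T^+be * Q + 'X^al * (T * theta (T ^+ be)) * Q
   + 'X^al * T ^+ be * ('X * T * Q^`())); first by ring.
rewrite E; ring.
Qed.

Lemma Qth_spec r : T ^+ r * thn r ('X^al * T ^+ be) = 'X^al * T ^+ be * Qth r.
Proof.
elim: r => [|r IH]; first by rewrite expr0 mul1r mulr1.
rewrite thnS /= exprS -mulrA.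
have -> : T ^+ r * theta (thn r ('X^al * T ^+ be)) =
   theta (T^+r * thn r ('X^al * T ^+ be)) - theta (T^+r) * thn r ('X^al * T ^+ be).
  by rewrite thetaM; ring.
rewrite IH mulrBr e3 mulrA T_thetaT -!mulrA IH /Qnext !rmorphM !rmorphB /=.
ring.
Qed.

Lemma size_T : (size T <= 2)%N.
Proof.
apply: leq_trans (size_polyD _ _) _; rewrite geq_max.
rewrite (leq_trans (size_scale_leq _ _)) ?size_polyX //.
by rewrite (leq_trans (size_polyC_leq1 _)).
Qed.

Lemma size_Qth r : (size (Qth r) <= r.+1)%N.
Proof.
elim: r => [|r IH] /=; first by rewrite size_poly1.
rewrite /Qnext.
apply: leq_trans (size_polyD _ _) _; rewrite geq_max; apply/andP; split.
  apply: leq_trans (size_polyMleq _ _) _.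
  have HA : (size (((al%:R)%:P * T + ((be%:R - r%:R) * u)%:P * 'X)%R : {poly K}) <= 2)%N.
    apply: leq_trans (size_polyD _ _) _; rewrite geq_max; apply/andP; split.
      rewrite mul_polyC (leq_trans (size_scale_leq _ _)) ?size_T //.
    by rewrite mul_polyC (leq_trans (size_scale_leq _ _)) ?size_polyX.
  lia.
apply: leq_trans (size_polyMleq _ _) _.
have H1 : (size ('X * T : {poly K})%R <= 3)%N.
  apply: leq_trans (size_polyMleq _ _) _; rewrite size_polyX; have := size_T; lia.
have H2 : (size (Qth r)^`() <= r)%N.
  have [->|nz] := eqVneq (Qth r) 0; first by rewrite deriv0 size_poly0.
  have := lt_size_deriv nz; lia.
lia.
Qed.
End Up.

Section Wr.
Variable K : fieldType.
Hypothesis hK : [pchar K] =i pred0.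

Lemma natr_inj m n : (m%:R == n%:R :> K) = (m == n).
Proof.
have key : forall m n, (m <= n)%N -> (m%:R == n%:R :> K) = (m == n).
  move=> a b ab; rewrite eq_sym -subr_eq0 -natrB // (proj1 (pcharf0P _) hK).
  by apply/idP/idP => /eqP H; apply/eqP; lia.
case: (leqP m n) => [mn|nm]; first exact: key.
by rewrite eq_sym (key n m (ltnW nm)) eq_sym.
Qed.

Definition Wm k (f : 'I_k -> {poly K}) : 'M_k := \matrix_(r < k, i < k) thn r (f i).
Definition Wr k (f : 'I_k -> {poly K}) := \det (Wm f).
Definition gM k (f : 'I_k -> {poly K}) (M : 'M[K]_k) j := \sum_i M i j *: f i.

Lemma Wm_gM k (f : 'I_k -> {poly K}) M : Wm (gM f M) = Wm f *m map_mx polyC M.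
Proof.
apply/matrixP => r j; rewrite !mxE /gM thn_sum; apply: eq_bigr => i _.
by rewrite !mxE thnZ -mul_polyC mulrC.
Qed.

Lemma Wr_gM k (f : 'I_k -> {poly K}) M : Wr (gM f M) = Wr f * (\det M)%:P.
Proof. by rewrite /Wr Wm_gM det_mulmx det_map_mx. Qed.

Lemma size_det k (A : 'M[{poly K}]_k) :
  (forall r i, size (A r i) <= r.+1)%N -> (size (\det A) <= (\sum_(r < k) r).+1)%N.
Proof.
move=> HA; rewrite /determinant.
apply: (big_ind (fun p : {poly K} => size p <= (\sum_(r < k) r).+1)%N).
- by rewrite size_poly0.
- move=> p q Hp Hq; apply: leq_trans (size_polyD _ _) _; by rewrite geq_max Hp Hq.
move=> s _.
have Hprod : (size (\prod_i A i (s i))%R <= (\sum_(r < k) r).+1)%N.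
  apply: (big_ind2 (fun (p : {poly K}) (n : nat) => size p <= n.+1)%N).
  - by rewrite size_poly1.
  - move=> p1 n1 p2 n2 H1 H2; apply: leq_trans (size_polyMleq _ _) _; lia.
  by move=> i _; apply: HA.
case: (odd_perm s) => /=; last by rewrite expr0 mul1r.
by rewrite expr1 mulN1r size_polyN.
Qed.

Definition vlow (p : {poly K}) := find (fun c : K => c != 0) (polyseq p).

Lemma has_nz (p : {poly K}) : p != 0 -> has (fun c : K => c != 0) (polyseq p).
Proof.
move=> nz; apply/hasP; exists (lead_coef p); last by rewrite lead_coef_eq0.
rewrite /lead_coef; apply: mem_nth; rewrite prednK ?size_poly_gt0 //.
Qed.

Lemma vlow_coef (p : {poly K}) : p != 0 -> p`_(vlow p) != 0.
Proof. by move=> nz; have := nth_find 0 (has_nz nz). Qed.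

Lemma vlow_before (p : {poly K}) i : (i < vlow p)%N -> p`_i = 0.
Proof. by move=> H; have := before_find 0 H => /negbFE/eqP. Qed.

Lemma vlow_lt (p : {poly K}) : p != 0 -> (vlow p < size p)%N.
Proof. by move=> nz; rewrite /vlow -has_find has_nz. Qed.

Lemma vlow_ge n (p : {poly K}) : p != 0 -> (forall i, (i < n)%N -> p`_i = 0) -> (n <= vlow p)%N.
Proof.
move=> nz H; rewrite leqNgt; apply/negP => /H /eqP.
by have := vlow_coef nz => /negPf ->.
Qed.

Lemma Xn_drop n (p : {poly K}) : (forall i, (i < n)%N -> p`_i = 0) -> p = 'X^n * drop_poly n p.
Proof.
move=> H; apply/polyP => i; rewrite coefXnM coef_drop_poly.
by case: ltnP => [/H //|ni]; rewrite subnK.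
Qed.

Lemma polyXn_neq0 n : ('X^n : {poly K}) != 0.
Proof. by rewrite -size_poly_eq0 size_polyXn. Qed.

Lemma W_distinct k (g : 'I_k -> {poly K}) : (forall i, g i != 0) ->
  (forall i j, i != j -> vlow (g i) != vlow (g j)) -> Wr g != 0.
Proof.
move=> nz dist.
pose w i := vlow (g i); pose h i := drop_poly (w i) (g i).
have gE i : g i = 'X^(w i) * h i by apply: Xn_drop => t; apply: vlow_before.
have h0 i : (h i).[0] != 0.
  by rewrite horner_coef0 coef_drop_poly add0n; apply: vlow_coef.
pose Rm := \matrix_(r < k, i < k) Rth (w i) (h i) r.
have WE : Wm g = Rm *m diag_mx (\row_i 'X^(w i)).
  by apply/matrixP => r i; rewrite mul_mx_diag !mxE [g i]gE thn_Xn mulrC.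
rewrite /Wr WE det_mulmx det_diag mulf_neq0 //; last first.
  by apply/prodf_neq0 => i _; rewrite mxE polyXn_neq0.
apply/negP => /eqP H.
have : horner_eval 0 (\det Rm) = 0 by rewrite H rmorph0.
rewrite -det_map_mx.
have ME : map_mx (horner_eval 0) Rm =
    Vandermonde k (\row_i ((w i)%:R : K)) *m diag_mx (\row_i (h i).[0]).
  by apply/matrixP => r i; rewrite mul_mx_diag !mxE horner_evalE Rth0.
rewrite ME det_mulmx det_Vandermonde det_diag; apply/eqP.
rewrite mulf_neq0 //; last by apply/prodf_neq0 => i _; rewrite mxE.
apply/prodf_neq0 => i _; apply/prodf_neq0 => j ij.
rewrite !mxE subr_eq0 eq_sym natr_inj; apply: dist.
by rewrite neq_ltn ij.
Qed.

Lemma gM1 k (f : 'I_k -> {poly K}) j : gM f 1%:M j = f j.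
Proof.
rewrite /gM (bigD1 j) //= mxE eqxx scale1r big1 ?addr0 // => i ij.
by rewrite mxE (negPf ij) scale0r.
Qed.

Lemma size_gM k (f : 'I_k -> {poly K}) M j :
  (size (gM f M j) <= \max_i size (f i))%N.
Proof.
apply: leq_trans (size_sum _ _ _) _; apply/bigmax_leqP => i _.
by apply: leq_trans (size_scale_leq _ _) _; apply: leq_bigmax.
Qed.

Lemma zero_col k (M : 'M[K]_k) j : \det M != 0 -> exists i, M i j != 0.
Proof.
move=> dM; case: (boolP [exists i, M i j != 0]) => [/existsP//|/existsPn H].
move: dM; rewrite (expand_det_col _ j) big1 ?eqxx // => i _.
by have := H i => /negbNE/eqP ->; rewrite mul0r.
Qed.

Lemma adapt k (f : 'I_k -> {poly K}) :
  (exists c : 'I_k -> K, (exists j, c j != 0) /\ \sum_i c i *: f i = 0) \/ Wr f != 0.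
Proof.
pose S := (\max_i size (f i))%N.
pose meas M := (\sum_j (S - vlow (gM f M j)))%N.
suff H : forall n (M : 'M[K]_k), \det M != 0 -> (meas M < n)%N ->
  (exists c : 'I_k -> K, (exists j, c j != 0) /\ \sum_i c i *: f i = 0) \/ Wr f != 0.
  by apply: (H (meas 1%:M).+1 1%:M); rewrite ?det1 ?oner_neq0.
elim=> [//|n IH] M dM mM.
case: (boolP [exists j, gM f M j == 0]) => [/existsP[j /eqP gj0]|/existsPn nz].
  by left; exists (fun i => M i j); split; [exact: zero_col | exact: gj0].
case: (boolP [exists i, exists j, (i != j) && (vlow (gM f M i) == vlow (gM f M j))]);
    last first.
  move/existsPn => Hd; right.
  have : Wr (gM f M) != 0.
    apply: W_distinct => // i j ij; have := Hd i => /existsPn /(_ j).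
    by rewrite ij.
  by rewrite Wr_gM; apply: contraNneq => ->; rewrite mul0r.
move=> /existsP[i /existsP[j /andP[ij /eqP vij]]].
pose g := gM f M; pose w := vlow (g j).
pose c := (g j)`_w / (g i)`_w.
pose E := (1%:M - c *: delta_mx i j : 'M[K]_k).
pose M' := M *m E.
have dE : \det E != 0.
  have EE : E *m (1%:M + c *: delta_mx i j) = 1%:M.
    rewrite /E mulmxDr !mulmxBl !mul1mx !mulmx1 -!scalemxAl -!scalemxAr.
    rewrite mul_delta_mx_0 1?eq_sym // !scaler0 subr0.
    by rewrite subrK.
  apply/negP => /eqP E0; have := congr1 determinant EE.
  by rewrite det_mulmx E0 mul0r det1 => /eqP; rewrite eq_sym oner_eq0.
have dM' : \det M' != 0 by rewrite det_mulmx mulf_neq0.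
have M'E r s : M' r s = M r s - c * M r i * (s == j)%:R.
  rewrite /M' /E mulmxBr mulmx1 -scalemxAr !mxE; congr (_ - _); rewrite -mulrA.
  congr (_ * _); rewrite (bigD1 i) //= !mxE eqxx /= big1 ?addr0 //.
  by move=> t ti; rewrite !mxE (negPf ti) mulr0.
have gM' s : gM f M' s = g s - ((s == j)%:R * c) *: g i.
  rewrite /g /gM scaler_sumr -sumrB; apply: eq_bigr => r _.
  by rewrite M'E scalerA scalerBl; congr (_ - _); congr (_ *: _); ring.
case: (eqVneq (gM f M' j) 0) => [z|nzj].
  by left; exists (fun r => M' r j); split; [exact: zero_col | exact: z].
apply: (IH M' dM').
have ginz : g i != 0 := nz i.
have gjnz : g j != 0 := nz j.
have vlt : (w < vlow (gM f M' j))%N.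
  apply: vlow_ge => // t tw; rewrite gM' eqxx mul1r coefB coefZ.
  have vi : vlow (g i) = w by [].
  case: (ltngtP t w) => [tlt|wt|->].
  - by rewrite !vlow_before ?vi // mulr0 subr0.
  - lia.
  rewrite /c divfK ?subrr //; rewrite -vi; exact: vlow_coef.
have wS : (w < S)%N.
  apply: leq_trans (vlow_lt gjnz) _; exact: size_gM.
move: mM; rewrite /meas (bigD1 j) //= => mM; rewrite (bigD1 j) //=.
have -> : (\sum_(s | s != j) (S - vlow (gM f M' s)) =
           \sum_(s | s != j) (S - vlow (gM f M s)))%N.
  by apply: eq_bigr => s sj; rewrite gM' (negPf sj) mul0r scale0r subr0.
move: vlt wS mM; rewrite /w /g; set Y := (\sum_(s | s != j) _)%N; set Z := vlow (gM f M j); set Z2 := vlow _. clearbody S; lia.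
Qed.

End Wr.

Section Main.
Variable K : fieldType.
Hypothesis hK : [pchar K] =i pred0.
Variables u v : K.
Hypothesis huv : u * v != 0.
Local Notation T := (u *: 'X + v%:P : {poly K}).

Lemma v_neq0 : v != 0.
Proof. by move: huv; rewrite mulf_eq0 negb_or => /andP[]. Qed.

Lemma T0 : T.[0] = v.
Proof. by rewrite hornerD hornerZ hornerX hornerC mulr0 add0r. Qed.

Lemma T_neq0 : T != 0.
Proof. by apply: contra_neq v_neq0 => H; rewrite -T0 H horner0. Qed.

Lemma coprimeXT N B : coprimep ('X^N) (T ^+ B).
Proof.
apply/coprimep_expl/coprimep_expr; rewrite coprimep_sym.
have := coprimep_XsubC T 0; rewrite subr0 => ->.
by rewrite /root T0 v_neq0.
Qed.

Lemma Wr_ext k (f g : 'I_k -> {poly K}) : f =1 g -> Wr f = Wr g.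
Proof. by move=> fg; rewrite /Wr; congr determinant; apply/matrixP => r i; rewrite !mxE fg. Qed.

Lemma wr_bound m (al be : 'I_m.+1 -> nat) (a : 'I_m.+1 -> K) N :
  a ord0 != 0 -> Wr (fun i => 'X^(al i) * T ^+ (be i)) != 0 ->
  'X^N %| \sum_i a i *: ('X^(al i) * T ^+ (be i)) ->
  (N <= al ord0 + 'C(m.+1, 2))%N.
Proof.
set f := fun i => _; set P := \sum_i _ => a0 Wf XP.
pose M : 'M[K]_m.+1 := \matrix_(i, j) if j == ord0 then a i else (i == j)%:R.
pose g := fun j : 'I_m.+1 => if j == ord0 then P else f j.
have gE : gM f M =1 g.
  move=> j; rewrite /gM /g; case: (eqVneq j ord0) => [->|jn].
    by apply: eq_bigr => i _; rewrite mxE eqxx.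
  rewrite (bigD1 j) //= mxE (negPf jn) eqxx scale1r big1 ?addr0 // => i ij.
  by rewrite mxE (negPf jn) (negPf ij) scale0r.
have dM : \det M = a ord0.
  rewrite det_trig; last first.
    apply/is_trig_mxP => i j ij; rewrite mxE.
    have jn : j != ord0 by rewrite -val_eqE /=; move: ij; case: (val j) => //.
    by rewrite (negPf jn) (_ : (i == j) = false) //; apply/negbTE; rewrite neq_ltn ij.
  rewrite big_ord_recl mxE eqxx big1 ?mulr1 // => i _.
  by rewrite mxE eqxx /= .
have WgE : Wr g = Wr f * (a ord0)%:P by rewrite -(Wr_ext gE) Wr_gM dM.
have [q Pq] := dvdpP _ _ XP.
pose w := fun j : 'I_m.+1 => if j == ord0 then N else al j.
pose q' := fun j : 'I_m.+1 => if j == ord0 then q else T ^+ (be j).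
have g_eq j : g j = 'X^(w j) * q' j.
  by rewrite /g /w /q'; case: (j == ord0); rewrite // Pq mulrC.
pose Sm := \matrix_(r < m.+1, j < m.+1) Rth (w j) (q' j) r.
have WgS : Wr g = \det Sm * 'X^(\sum_j w j).
  rewrite /Wr -prodrXr.
  have -> : Wm g = Sm *m diag_mx (\row_j 'X^(w j)).
    by apply/matrixP => r j; rewrite mul_mx_diag !mxE g_eq thn_Xn mulrC.
  by rewrite det_mulmx det_diag; congr (_ * _); apply: eq_bigr => j _; rewrite mxE.
pose Qm := \matrix_(r < m.+1, i < m.+1) Qth u v (al i) (be i) r.
have WfQ : T ^+ (\sum_(r < m.+1) r) * Wr f =
    \det Qm * ('X^(\sum_i al i) * T ^+ (\sum_i be i)).
  have E : diag_mx (\row_(r < m.+1) T ^+ r) *m Wm f =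
       Qm *m diag_mx (\row_i ('X^(al i) * T ^+ (be i))).
    apply/matrixP => r i; rewrite mul_mx_diag mul_diag_mx !mxE.
    by rewrite Qth_spec mulrC.
  have := congr1 determinant E; rewrite !det_mulmx !det_diag.
  have -> : \prod_i (\row_(r < m.+1) T ^+ r) 0 i = T ^+ (\sum_(r < m.+1) r).
    by rewrite -prodrXr; apply: eq_bigr => i _; rewrite mxE.
  have -> : \prod_i (\row_i ('X^(al i) * T ^+ (be i))) 0 i =
      'X^(\sum_i al i) * T ^+ (\sum_i be i).
    by rewrite -!prodrXr -big_split /=; apply: eq_bigr => i _; rewrite mxE.
  by [].
have Qnz : \det Qm != 0.
  apply: contra Wf => /eqP Q0; move: WfQ; rewrite Q0 mul0r => /eqP.
  by rewrite mulf_eq0 expf_eq0 (negPf T_neq0) andbF.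
have sizeQ : (size (\det Qm) <= 'C(m.+1, 2).+1)%N.
  rewrite -bin2_sum big_mkord; apply: size_det => r i; rewrite mxE; exact: size_Qth.
pose S' := (\sum_(i < m) al (lift ord0 i))%N.
have Sw : (\sum_j w j = N + S')%N.
  rewrite big_ord_recl /w eqxx; congr (_ + _)%N; apply: eq_bigr => i _.
have Sa : (\sum_i al i = al ord0 + S')%N by rewrite big_ord_recl.
have D1 : 'X^(\sum_j w j) %| Wr f.
  have : 'X^(\sum_j w j) %| Wr g by rewrite WgS dvdp_mull.
  rewrite WgE => H.
  have -> : Wr f = Wr f * (a ord0)%:P * ((a ord0)^-1)%:P.
    by rewrite -mulrA -polyCM divff // mulr1.
  exact: dvdp_mulr.
have D2 : 'X^(\sum_j w j) %| 'X^S' * ('X^(al ord0) * \det Qm * T ^+ (\sum_i be i)).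
  have -> : 'X^S' * ('X^(al ord0) * \det Qm * T ^+ (\sum_i be i)) =
      T ^+ (\sum_(r < m.+1) r) * Wr f.
    by rewrite WfQ Sa exprD; ring.
  exact: dvdp_mull.
move: D2; rewrite Sw exprD mulrC dvdp_mul2l ?polyXn_neq0 // Gauss_dvdpl ?coprimeXT //.
move=> D3; have := dvdp_leq (mulf_neq0 (polyXn_neq0 _ _) Qnz) D3.
rewrite size_polyXn mulrC size_mulXn //. move=> H; rewrite -ltnS; apply: leq_trans H _; rewrite -addnS leq_add2l; exact: sizeQ.
Qed.

Lemma lift_le m (j : 'I_m.+1) (i : 'I_m) : (i <= lift j i <= i.+1)%N.
Proof. rewrite /= /bump; case: (leqP j i) => _ /=; rewrite ?add0n ?add1n ?leqnn ?leqnSn //. Qed.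

Lemma lift_mono m (j : 'I_m.+1) (i i' : 'I_m) : (i <= i')%N -> (lift j i <= lift j i')%N.
Proof.
rewrite /= /bump; case: (leqP j i); case: (leqP j i') => //= *; lia.
Qed.

Lemma main m : forall (al be : 'I_m -> nat) (a : 'I_m -> K) N,
  (forall i j : 'I_m, (i <= j)%N -> (al i <= al j)%N) ->
  \sum_i a i *: ('X^(al i) * T ^+ (be i)) != 0 ->
  'X^N %| \sum_i a i *: ('X^(al i) * T ^+ (be i)) ->
  (N <= \max_(i < m) (al i + 'C(m - i, 2)))%N.
Proof.
elim: m => [|m IH] al be a N hal.
  by rewrite !big_ord0 eqxx.
set P := \sum_i _ => Pnz XP.
have rem : forall (b : 'I_m.+1 -> K) j, b j = 0 ->
    \sum_i b i *: ('X^(al i) * T ^+ (be i)) = P ->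
    (N <= \max_(i < m.+1) (al i + 'C(m.+1 - i, 2)))%N.
  move=> b j bj bP.
  have bP' : \sum_(i < m) b (lift j i) *: ('X^(al (lift j i)) * T ^+ (be (lift j i))) = P.
    by rewrite -bP (bigD1_ord j) //= bj scale0r add0r.
  have := IH (fun i => al (lift j i)) (fun i => be (lift j i)) (fun i => b (lift j i)) N.
  rewrite bP' => /(_ _ Pnz XP) H.
  have {H} := H (fun i i' ii' => hal _ _ (lift_mono j ii')).
  move=> H; apply: leq_trans H _; apply/bigmax_leqP => i _.
  apply: leq_trans (leq_bigmax (lift j i)); rewrite leq_add2l leq_bin2l //.
  by have := lift_le j i; lia.
case: (eqVneq (a ord0) 0) => [a0|a0].
  exact: (rem a ord0 a0).
case: (adapt hK (fun i => 'X^(al i) * T ^+ (be i))) => [[c [[j cj] cdep]]|Wf].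
  pose b i := a i - a j * c i / c j.
  apply: (rem b j); first by rewrite /b mulfK // subrr.
  have -> : \sum_i b i *: ('X^(al i) * T ^+ (be i)) =
      P - (a j / c j) *: \sum_i c i *: ('X^(al i) * T ^+ (be i)).
    rewrite scaler_sumr -sumrB; apply: eq_bigr => i _.
    by rewrite /b scalerA scalerBl mulrAC.
  by rewrite cdep scaler0 subr0.
have := wr_bound a0 Wf XP => H; apply: leq_trans H _.
by apply: leq_trans (leq_bigmax ord0); rewrite subn0.
Qed.

End Main.

Unset Implicit Arguments.

(* Indices j = 1..l of the paper are i = 0..l-1 here (j = i+1),
   so binom(l+1-j, 2) = 'C(l - i, 2). *)
Theorem theorem2p1 (K : fieldType) (hK : [pchar K] =i pred0)
  (u v : K) (huv : u * v != 0) (l : nat)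
  (a : 'I_l -> K) (alpha beta : 'I_l -> nat)
  (halpha : forall i j : 'I_l, (i <= j)%N -> (alpha i <= alpha j)%N) :
  let P := \sum_(i < l) a i *: ('X^(alpha i) * (u *: 'X + v%:P) ^+ beta i) in
  P != 0 ->
  (poly_val P <= \max_(i < l) (alpha i + 'C(l - i, 2)))%N.
Proof.
move=> P Pnz; rewrite /poly_val; apply/bigmax_leqP => i Hi.
exact: (main hK huv halpha Pnz Hi).
Qed.
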